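(* Let $p$ be an odd prime and $m>1$. Let $H$ be a subgroup of $\mathrm{GL}_m(p)$ of order coprime to $p$ which acts transitively on the nonzero vectors of $\mathbb{F}_p^m$, with $|H|\ge p^m-1$ and $|Z(H)|\ge\frac{p^m-1}{p}$. Then $H\cong\mathrm{GL}_1(p^m)$ is cyclic of order $p^m-1$. *)

(* Defs.v *)
From HB Require Import structures.
From mathcomp Require Import all_boot all_order all_algebra all_fingroup all_solvable.
Set Implicit Arguments. Unset Strict Implicit. Unset Printing Implicit Defensive.
Import GRing.Theory.
Local Open Scope ring_scope.

Definition transitive_on_nonzero (p n : nat) (H : {set {'GL_n['F_p]}}) : Prop :=
  forall u v : 'rV['F_p]_(n.-1.+1), u != 0 -> v != 0 ->
    exists2 g, g \in H & v = u *m GLval g.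

(* Main.v *)
Require Import Defs.
From HB Require Import structures.
From mathcomp Require Import all_boot all_order all_algebra all_fingroup all_solvable.
From mathcomp Require Import zify.

Set Implicit Arguments. Unset Strict Implicit. Unset Printing Implicit Defensive.
Import GRing.Theory.
Local Open Scope ring_scope.

Theorem lemma5p16 (p m : nat) (H : {group {'GL_m['F_p]}}) :
  prime p -> odd p -> (1 < m)%N ->
  coprime #|H| p ->
  transitive_on_nonzero H ->
  (p ^ m - 1 <= #|H|)%N ->
  (p ^ m - 1 <= p * #|'Z(H)%g|)%N ->
  cyclic H /\ #|H| = (p ^ m - 1)%N.
Proof.
move=> pr oddp m1 _.
case: m H m1 => [|n] H m1 tr hH hZ //.
pose Z' : {set 'M['F_p]_n.+1} :=
  [set x | [forall z in 'Z(H)%g, x *m GLval z == GLval z *m x]].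
pose K : {set 'M['F_p]_n.+1} := [set k | [forall x in Z', k *m x == x *m k]].
have HZ' h : h \in H -> GLval h \in Z'.
  move=> Hh; rewrite inE; apply/forall_inP => z /centerP [_ cz].
  by rewrite -!GL_MxE (cz h Hh).
have ZZ' z : z \in 'Z(H)%g -> GLval z \in Z'.
  by move=> /centerP [Hz _]; apply: HZ'.
have ZK z : z \in 'Z(H)%g -> GLval z \in K.
  move=> Zz; rewrite inE; apply/forall_inP => x; rewrite inE => /forall_inP/(_ z Zz)/eqP->.
  by [].
have KH k h : k \in K -> h \in H -> k *m GLval h = GLval h *m k.
  by rewrite inE => /forall_inP kK Hh; apply/eqP; apply: kK; apply: HZ'.
have Kcomm k1 k2 : k1 \in K -> k2 \in K -> k1 *m k2 = k2 *m k1.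
  rewrite inE => /forall_inP k1K k2K; apply/eqP; apply: k1K.
  rewrite inE; apply/forall_inP => z Zz.
  move: k2K; rewrite inE => /forall_inP k2K.
  by apply: k2K; apply: ZZ'.
have K0 : (0 : 'M['F_p]_n.+1) \in K.
  by rewrite inE; apply/forall_inP => x _; rewrite mul0mx mulmx0.
have K1 : (1%:M : 'M['F_p]_n.+1) \in K.
  by rewrite inE; apply/forall_inP => x _; rewrite mul1mx mulmx1.
have KB k1 k2 : k1 \in K -> k2 \in K -> k1 - k2 \in K.
  rewrite !inE => /forall_inP k1K /forall_inP k2K; apply/forall_inP => x Zx.
  by rewrite mulmxBl mulmxBr (eqP (k1K x Zx)) (eqP (k2K x Zx)).
have KD k1 k2 : k1 \in K -> k2 \in K -> k1 + k2 \in K.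
  move=> k1K k2K; have := KB _ _ k1K (KB _ _ K0 k2K).
  by rewrite sub0r opprK.
have kill k (v : 'rV['F_p]_n.+1) : k \in K -> v != 0 -> v *m k = 0 -> k = 0.
  move=> Kk nv vk; apply/row_matrixP => i; rewrite row0 rowE.
  have [->|nu] := eqVneq (delta_mx 0 i : 'rV['F_p]_n.+1) 0; first by rewrite mul0mx.
  have [g Hg ->] := tr v _ nv nu.
  by rewrite -mulmxA -KH // mulmxA vk mul0mx.
pose v0 : 'rV['F_p]_n.+1 := delta_mx 0 ord0.
have v0nz : v0 != 0.
  apply/eqP => /matrixP/(_ ord0 ord0); rewrite !mxE /= => /eqP.
  by rewrite oner_eq0.
have inj : {in K &, injective (fun k => v0 *m k)}.
  move=> k1 k2 K1' K2' /= e; apply/eqP; rewrite -subr_eq0; apply/eqP.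
  by apply: (kill _ v0) => //; [apply: KB | rewrite mulmxBr e subrr].
pose W := [set v0 *m k | k in K].
have gW : group_set W.
  apply/group_setP; split; first by apply/imsetP; exists 0; rewrite ?mulmx0.
  move=> x y /imsetP [k1 K1' ->] /imsetP [k2 K2' ->].
  by apply/imsetP; exists (k1 + k2); [apply: KD | rewrite mulmxDr].
pose WG := Group gW.
have cardW : #|W| = #|K| by rewrite card_in_imset.
have cardV : #|[set: 'rV['F_p]_n.+1]| = (p ^ n.+1)%N.
  by rewrite cardsT card_mx card_Fp // mul1n.
have : (#|K| %| p ^ n.+1)%N.
  by rewrite -cardW -cardV; apply: (@cardSg _ [set: 'rV['F_p]_n.+1]%G WG); apply: subsetT.
case/(dvdn_pfactor _ _ pr) => e len cK.
have ee : e = n.+1.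
  apply/eqP; rewrite eqn_leq len /=; rewrite ltnNge; apply/negP => le_e.
  have : (#|'Z(H)%g| <= #|K| - 1)%N.
    rewrite -(card_imset _ val_inj) (cardsD1 0 K) K0 addKn.
    apply: subset_leq_card; apply/subsetP => x /imsetP [z Zz ->].
    by rewrite 2!inE ZK // andbT; apply/eqP => z0; move: (GL_unit z); rewrite z0 unitr0.
  rewrite cK => hz.
  have hpe : (p ^ e.+1 <= p ^ n.+1)%N by rewrite leq_exp2l // prime_gt1.
  have p2 := prime_gt1 pr.
  move: hpe hZ hz; rewrite expnS; set X := (p ^ e)%N; set Y := (p ^ n.+1)%N; nia.
have WT : W = [set: 'rV['F_p]_n.+1].
  by apply/eqP; rewrite eqEcard subsetT cardV cardW cK ee /=.
have surj u : exists2 k, k \in K & u = v0 *m k.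
  have : u \in W by rewrite WT inE.
  by case/imsetP=> k Kk ->; exists k.
have HK h : h \in H -> GLval h \in K.
  move=> Hh; have [k Kk e1] := surj (v0 *m GLval h).
  suff -> : GLval h = k by [].
  apply/row_matrixP => i; rewrite !rowE.
  have [k' Kk' ->] := surj (delta_mx 0 i).
  by rewrite -!mulmxA (KH _ _ Kk' Hh) [LHS]mulmxA e1 -mulmxA (Kcomm _ _ Kk Kk').
have cardH : #|H| = (p ^ n.+1 - 1)%N.
  apply/eqP; rewrite eqn_leq hH andbT.
  rewrite -cardV cardsT subn1 -(cardsC1 (0 : 'rV['F_p]_n.+1)).
  have <- : #|[set v0 *m GLval h | h : {'GL_n.+1['F_p]} in H]| = #|H|.
    apply: card_in_imset => x y Hx Hy e1; apply: val_inj.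
    by apply: inj => //; apply: HK.
  apply: subset_leq_card; apply/subsetP => x /imsetP [h Hh ->].
  rewrite !inE; apply/eqP => h0.
  have : GLval h = 0 by apply: inj; rewrite ?HK // mulmx0.
  by move=> z0; have := GL_unit h; rewrite /= z0 unitr0.
split=> //.
apply: (@div_ring_mul_group_cyclic _ _ _ (@GLval n.+1 _)).
- by rewrite GL_1E.
- by move=> x y _ _; rewrite GL_ME.
- move=> x /setD1P [x1 Hx].
  have Kx : GLval x - 1 \in K by apply: KB => //; apply: HK.
  have nz : GLval x - 1 != 0.
    apply: contra x1; rewrite subr_eq0 => /eqP e1; apply/eqP; apply: val_inj.
    exact: (etrans e1 (esym (GL_1E _ _))).
  have : GLval x - 1 \in unitmx.
    rewrite -row_free_unit -kermx_eq0; apply/eqP/row_matrixP => i.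
    rewrite row0; apply/eqP; apply: contraT => nzr.
    case/negP: nz; apply/eqP; apply: (kill _ _ Kx nzr); apply/eqP.
    have := row_sub i (kermx (GLval x - 1)); rewrite sub_kermx; exact.
  by [].
- apply/centsP => x Hx y Hy; apply: val_inj.
  exact: (etrans (GL_MxE x y) (etrans (Kcomm _ _ (HK _ Hx) (HK _ Hy)) (esym (GL_MxE y x)))).
Qed.
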